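(* Let $f$, $f^{-1}$ be as in the context, and let $\Phi$ be a finite set of materials, each given by a Young's modulus $E>0$ and a density $\rho>0$. Fix a design domain of length $L>0$, height $h>0$ and imposed thickness $t>0$, a load $F>0$ and a maximal allowed deflection $\delta_{\max}>0$, and assume $tE\delta_{\max}/F\ge f(1)$ for every material $(E,\rho)\in\Phi$. For a material $(E,\rho)$ the minimal mass of a design meeting the deflection constraint is $M(E,\rho)=L\,h\,t\,\rho\,f^{-1}\!\left(\frac{tE\delta_{\max}}{F}\right)$. Let $(E_1,\rho_1)\in\Phi$ be a material with the lowest ratio $\rho/E$ in $\Phi$, and let $(E_2,\rho_2)\in\Phi$ be the optimal material, i.e. the material whose mass $M(E_2,\rho_2)$ (equivalently, whose index $\rho_2 f^{-1}(tE_2\delta_{\max}/F)$) is strictly smaller than that of every other material of $\Phi$. Then $\rho_2\ge\rho_1$.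
   Context: For a volume fraction $V_f\in(0,1]$ (ratio of design volume to design-domain volume), $f(V_f)$ denotes the globally optimal compliance attainable by a design of volume fraction $V_f$ in the given compliance topology optimization problem, computed for unit load, unit thickness and unit Young's modulus (the compliance--volume fraction Pareto front); for general load, thickness and modulus the compliance is $f(V_f)F^2/(tE)$ and the deflection at the load point is $f(V_f)F/(tE)$. Standing assumptions on $f$: $f$ is differentiable on $(0,1]$ with $f'<0$, $f(V_f)\to+\infty$ as $V_f\searrow0$, so $f$ is a bijection $(0,1]\to[f(1),+\infty[$ with decreasing inverse $f^{-1}$; and the efficiency ratio $n(V_f)=-V_f f'(V_f)/f(V_f)$ satisfies $n(V_f)\le 1$ for all $V_f\in(0,1]$. *)

(* Defs.v *)
From Stdlib Require Import Reals Lra List.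
Open Scope R_scope.

Definition has_deriv_on01 (f : R -> R) (x d : R) : Prop :=
  forall eps : R, 0 < eps -> exists delta : R, 0 < delta /\
    forall y : R, 0 < y <= 1 -> y <> x -> Rabs (y - x) < delta ->
      Rabs ((f y - f x) / (y - x) - d) < eps.

Definition pareto_front (f fd finv : R -> R) : Prop :=
  (forall x, 0 < x <= 1 -> has_deriv_on01 f x (fd x)) /\
  (forall x, 0 < x <= 1 -> fd x < 0) /\
  (forall K : R, exists d : R, 0 < d /\ forall V, 0 < V < d -> K < f V) /\
  (forall y, f 1 <= y -> 0 < finv y <= 1 /\ f (finv y) = y) /\
  (forall x, 0 < x <= 1 -> - x * fd x / f x <= 1).

Definition min_mass (finv : R -> R) (L h t F dmax E rho : R) : R :=
  L * h * t * rho * finv (t * E * dmax / F).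

(* Main.v *)
Require Import Defs.
From Stdlib Require Import Reals List Lra.
Open Scope R_scope.

Lemma deriv_opp g x d : has_deriv_on01 g x d ->
  has_deriv_on01 (fun y => - g y) x (- d).
Proof.
  intros H eps He. destruct (H eps He) as [del [Hd Hy]]. exists del; split; auto.
  intros y Hy1 Hy2 Hy3. specialize (Hy y Hy1 Hy2 Hy3).
  replace ((- g y - - g x) / (y - x) - - d) with (- ((g y - g x) / (y - x) - d)).
  - rewrite Rabs_Ropp; auto.
  - field. lra.
Qed.

Lemma deriv_mul_id f x d : 0 < x <= 1 -> has_deriv_on01 f x d ->
  has_deriv_on01 (fun y => y * f y) x (f x + x * d).
Proof.
  intros Hx H eps He.
  set (K := Rabs d + 1).
  assert (HK : 0 < K) by (unfold K; pose proof (Rabs_pos d); lra).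
  set (eta := Rmin 1 (eps/2)).
  assert (Heta : 0 < eta) by (unfold eta; apply Rmin_pos; lra).
  destruct (H eta Heta) as [d1 [Hd1 Hy]].
  exists (Rmin d1 (eps / (2*K))). split.
  { apply Rmin_pos; auto. apply Rdiv_lt_0_compat; lra. }
  intros y Hy1 Hy2 Hy3.
  assert (Hyx : y - x <> 0) by lra.
  assert (Hlt1 : Rabs (y - x) < d1) by (eapply Rlt_le_trans; [exact Hy3| apply Rmin_l]).
  assert (Hlt2 : Rabs (y - x) < eps / (2*K)) by (eapply Rlt_le_trans; [exact Hy3| apply Rmin_r]).
  specialize (Hy y Hy1 Hy2 Hlt1).
  set (Q := (f y - f x) / (y - x)) in *.
  assert (Hfy : f y = f x + Q * (y - x)) by (unfold Q; field; auto).
  replace ((y * f y - x * f x) / (y - x) - (f x + x * d))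
    with (Q * (y - x) + x * (Q - d)).
  2:{ rewrite Hfy. field. auto. }
  assert (HQ : Rabs Q < K).
  { unfold K. replace Q with (d + (Q - d)) by ring.
    eapply Rle_lt_trans; [apply Rabs_triang|].
    assert (eta <= 1) by apply Rmin_l. lra. }
  assert (Heta2 : eta <= eps/2) by apply Rmin_r.
  eapply Rle_lt_trans; [apply Rabs_triang|].
  rewrite !Rabs_mult. rewrite (Rabs_pos_eq x) by lra.
  assert (A1 : Rabs Q * Rabs (y - x) <= K * Rabs (y - x)).
  { apply Rmult_le_compat_r; [apply Rabs_pos| lra]. }
  assert (A2 : K * Rabs (y - x) < K * (eps / (2*K))).
  { apply Rmult_lt_compat_l; auto. }
  replace (K * (eps / (2*K))) with (eps/2) in A2 by (field; lra).
  assert (A3 : x * Rabs (Q - d) <= 1 * Rabs (Q - d)).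
  { apply Rmult_le_compat_r; [apply Rabs_pos| lra]. }
  lra.
Qed.

Lemma mono (g d : R -> R) a b : 0 < a -> a <= b -> b <= 1 ->
  (forall x, a <= x <= b -> has_deriv_on01 g x (d x)) ->
  (forall x, a <= x <= b -> 0 <= d x) -> g a <= g b.
Proof.
  intros Ha Hab Hb Hder Hpos.
  destruct (Req_dec a b) as [<-|Hne]; [lra|].
  assert (Hab' : a < b) by lra.
  assert (key : forall eps, 0 < eps -> g b - g a >= - eps * (b - a)).
  { intros eps He.
    set (S := fun x => a <= x <= b /\ g x - g a >= - eps * (x - a)).
    assert (Hbd : bound S) by (exists b; intros x [Hx _]; lra).
    assert (Hne' : exists x, S x) by (exists a; split; lra).
    destruct (completeness S Hbd Hne') as [s [Hub Hlub]].
    assert (Has : a <= s) by (apply Hub; split; lra).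
    assert (Hsb : s <= b) by (apply Hlub; intros x [Hx _]; lra).
    destruct (Hder s (conj Has Hsb) eps He) as [del [Hdel Hy]].
    assert (Hds := Hpos s (conj Has Hsb)).
    assert (Ss : S s).
    { destruct (Classical_Prop.classic (exists y, S y /\ s - del < y)) as [[y [Sy Hy']]|Hno].
      - assert (Hys : y <= s) by (apply Hub; auto).
        destruct (Req_dec y s) as [->|Hys']; auto.
        destruct Sy as [Hy1 Hy2].
        assert (Habs : Rabs (y - s) < del) by (apply Rabs_def1; lra).
        specialize (Hy y ltac:(lra) Hys' Habs).
        apply Rabs_def2 in Hy.
        set (Q := (g y - g s) / (y - s)) in *.
        assert (Hgy : g y - g s = Q * (y - s)) by (unfold Q; field; lra).
        split; [lra|].
        assert (Q * (s - y) >= - eps * (s - y)) by nra.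
        lra.
      - exfalso.
        assert (s <= s - del); [|lra].
        apply Hlub. intros x Sx.
        destruct (Rle_dec x (s - del)); auto.
        exfalso; apply Hno; exists x; split; auto; lra. }
    destruct (Req_dec s b) as [<-|Hsb'].
    - destruct Ss; auto.
    - exfalso.
      set (y := Rmin (s + del/2) b).
      assert (Hy1 : s < y) by (unfold y; apply Rmin_glb_lt; lra).
      assert (Hy2 : y <= b) by apply Rmin_r.
      assert (Hy3 : y <= s + del/2) by apply Rmin_l.
      assert (Habs : Rabs (y - s) < del) by (apply Rabs_def1; lra).
      specialize (Hy y ltac:(lra) ltac:(lra) Habs).
      apply Rabs_def2 in Hy.
      set (Q := (g y - g s) / (y - s)) in *.
      assert (Hgy : g y - g s = Q * (y - s)) by (unfold Q; field; lra).
      destruct Ss as [_ Ss].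
      assert (Sy : S y).
      { split; [lra|]. assert (Q * (y - s) >= - eps * (y - s)) by nra. lra. }
      specialize (Hub y Sy). lra. }
  destruct (Rle_dec (g a) (g b)) as [|Hn]; auto.
  exfalso.
  set (eps := (g a - g b) / (2 * (b - a))).
  assert (He : 0 < eps) by (unfold eps; apply Rdiv_lt_0_compat; lra).
  specialize (key eps He).
  replace (- eps * (b - a)) with (- ((g a - g b) / 2)) in key by (unfold eps; field; lra).
  lra.
Qed.

Theorem proposition1
  (f fd finv : R -> R) (Hf : pareto_front f fd finv)
  (Phi : list (R * R))
  (HPhi : forall m, In m Phi -> 0 < fst m /\ 0 < snd m)
  (L h t F dmax : R)
  (HL : 0 < L) (Hh : 0 < h) (Ht : 0 < t) (HF : 0 < F) (Hd : 0 < dmax)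
  (Hfeas : forall m, In m Phi -> f 1 <= t * fst m * dmax / F)
  (E1 rho1 : R) (H1in : In (E1, rho1) Phi)
  (H1min : forall m, In m Phi -> rho1 / E1 <= snd m / fst m)
  (E2 rho2 : R) (H2in : In (E2, rho2) Phi)
  (H2opt : forall m, In m Phi -> m <> (E2, rho2) ->
     min_mass finv L h t F dmax E2 rho2 < min_mass finv L h t F dmax (fst m) (snd m)) :
  rho1 <= rho2.
Proof.
  destruct Hf as [Hder [Hneg [_ [Hinv Hn]]]].
  destruct (HPhi _ H1in) as [HE1 Hr1]; destruct (HPhi _ H2in) as [HE2 Hr2]; simpl in *.
  destruct (Rle_dec rho1 rho2) as [|Hc]; auto. exfalso.
  assert (Hneq : (E1, rho1) <> (E2, rho2)) by (intro Heq; inversion Heq; lra).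
  specialize (H2opt _ H1in Hneq). unfold min_mass in H2opt; simpl in H2opt.
  specialize (H1min _ H2in); simpl in H1min.
  assert (Hm : rho1 * E2 <= rho2 * E1).
  { apply (Rmult_le_compat_r (E1 * E2)) in H1min; [|nra].
    replace (rho1 / E1 * (E1 * E2)) with (rho1 * E2) in H1min by (field; lra).
    replace (rho2 / E2 * (E1 * E2)) with (rho2 * E1) in H1min by (field; lra).
    lra. }
  set (c := t * dmax / F).
  assert (Hc0 : 0 < c) by (unfold c; apply Rdiv_lt_0_compat; nra).
  assert (Hy1 : t * E1 * dmax / F = c * E1) by (unfold c; field; lra).
  assert (Hy2 : t * E2 * dmax / F = c * E2) by (unfold c; field; lra).
  pose proof (Hfeas _ H1in) as F1; pose proof (Hfeas _ H2in) as F2; simpl in F1, F2.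
  rewrite Hy1 in F1, H2opt; rewrite Hy2 in F2, H2opt.
  destruct (Hinv _ F1) as [HV1 Hf1]; destruct (Hinv _ F2) as [HV2 Hf2].
  set (V1 := finv (c * E1)) in *; set (V2 := finv (c * E2)) in *.
  assert (HE : E2 < E1) by nra.
  assert (Hdec : forall a b, 0 < a -> a <= b -> b <= 1 -> f b <= f a).
  { intros a b Ha Hab Hb.
    assert (- f a <= - f b); [|lra].
    apply (mono (fun y => - f y) (fun y => - fd y)); auto.
    - intros x Hx. apply deriv_opp. apply Hder; lra.
    - intros x Hx. specialize (Hneg x ltac:(lra)). lra. }
  assert (HV12 : V1 <= V2).
  { destruct (Rle_dec V1 V2) as [|Hv]; auto.
    specialize (Hdec V2 V1 ltac:(lra) ltac:(lra) ltac:(lra)). nra. }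
  assert (Hg : V1 * f V1 <= V2 * f V2).
  { apply (mono (fun y => y * f y) (fun y => f y + y * fd y)); try lra.
    - intros x Hx. apply deriv_mul_id; [lra|]. apply Hder; lra.
    - intros x Hx.
      assert (Hfx : c * E2 <= f x) by (rewrite <- Hf2; apply Hdec; lra).
      assert (Hfp : 0 < f x) by nra.
      specialize (Hn x ltac:(lra)).
      apply (Rmult_le_compat_r (f x)) in Hn; [|lra].
      replace (- x * fd x / f x * f x) with (- x * fd x) in Hn by (field; lra).
      lra. }
  rewrite Hf1, Hf2 in Hg.
  assert (HVE : V1 * E1 <= V2 * E2) by nra.
  assert (Hlht : 0 < L * h * t) by (apply Rmult_lt_0_compat; nra).
  assert (H2' : rho2 * V2 < rho1 * V1) by nra.
  nra.
Qed.
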